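(* The functors $(\cdot)^*:\mathbf{D\text{-}Frm}\to\mathbf{HLAs}$ and $(\cdot)_*:\mathbf{HLAs}\to\mathbf{D\text{-}Frm}$ form a dual equivalence of categories $\mathbf{HLAs}\equiv^{\mathrm{op}}\mathbf{D\text{-}Frm}$.
   Context: $\mathbf{HLAs}$: category of Heyting-Lewis algebras (Heyting algebras with binary $\multimap$ satisfying $(a\multimap b)\wedge(a\multimap c)=a\multimap(b\wedge c)$, $(a\multimap c)\wedge(b\multimap c)=(a\vee b)\multimap c$, $(a\multimap b)\wedge(b\multimap c)\le a\multimap c$, $a\multimap a=\top$) with Heyting homomorphisms preserving $\multimap$. A $\multimap$-frame is $(X,\preceq,\sqsubset)$, $\preceq$ a partial order, with $x\preceq y\sqsubset z\Rightarrow x\sqsubset z$; $a\Rightarrow b$ and $a\Rrightarrow b$ on $\preceq$-upsets are $\{x\mid\forall y(xRy, y\in a\Rightarrow y\in b)\}$ for $R={\preceq}$, resp. $R={\sqsubset}$. A general $\multimap$-frame $(X,\preceq,\sqsubset,P)$ has $P$ a family of $\preceq$-upsets containing $X,\emptyset$, closed under $\cap,\cup,\Rightarrow,\Rrightarrow$; it is descriptive if compact (any subfamily of $P\cup\{X\setminus a\mid a\in P\}$ with the finite intersection property has nonempty intersection), $\preceq$-refined ($x\not\preceq y\Rightarrow\exists a\in P$, $x\in a$, $y\notin a$) and $\sqsubset$-refined (not $x\sqsubset y\Rightarrow\exists a,b\in P$, $x\in a\Rrightarrow b$, $y\in a$, $y\notin b$). $\mathbf{D\text{-}Frm}$: descriptive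 $\multimap$-frames with morphisms $f$ that are bounded for both relations (for $R\in\{\preceq,\sqsubset\}$: $xRy\Rightarrow f(x)Rf(y)$, and $f(x)Rz'\Rightarrow\exists z$, $xRz$, $f(z)=z'$) and satisfy $f^{-1}(a')\in P$ for all admissible $a'$ of the codomain. $(\cdot)^*$ sends $(X,\preceq,\sqsubset,P)$ to the HL-algebra $(P,\cap,\cup,\Rightarrow,\Rrightarrow,X,\emptyset)$ and $f$ to $f^{-1}$. $(\cdot)_*$ sends $\mathbb A$ to $(\mathrm{pf}A,\subseteq,\sqsubset,\tilde A)$, where $\mathrm{pf}A$ is the set of prime filters, $\tilde a=\{\mathfrak p\mid a\in\mathfrak p\}$, $\tilde A=\{\tilde a\mid a\in A\}$, and $\mathfrak p\sqsubset\mathfrak q$ iff $\forall a,b$ ($a\multimap b\in\mathfrak p$ and $a\in\mathfrak q$ imply $b\in\mathfrak q$); it sends $h$ to $h^{-1}$. *)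

(* Defs.v *)
From Stdlib Require Import List.

Record HLAraw := mkHLA {
  hcar : Type;
  hmeet : hcar -> hcar -> hcar;
  hjoin : hcar -> hcar -> hcar;
  himp  : hcar -> hcar -> hcar;
  hlew  : hcar -> hcar -> hcar;
  htop  : hcar;
  hbot  : hcar }.

Definition hle (A : HLAraw) (a b : hcar A) : Prop := hmeet A a b = a.

Record isHLA (A : HLAraw) : Prop := {
  meetA : forall a b c, hmeet A a (hmeet A b c) = hmeet A (hmeet A a b) c;
  joinA : forall a b c, hjoin A a (hjoin A b c) = hjoin A (hjoin A a b) c;
  meetC : forall a b, hmeet A a b = hmeet A b a;
  joinC : forall a b, hjoin A a b = hjoin A b a;
  meet_absorb : forall a b, hmeet A a (hjoin A a b) = a;
  join_absorb : forall a b, hjoin A a (hmeet A a b) = a;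
  meet_top : forall a, hmeet A a (htop A) = a;
  join_bot : forall a, hjoin A a (hbot A) = a;
  imp_res : forall a b c, hle A (hmeet A a b) c <-> hle A a (himp A b c);
  lew_meet : forall a b c,
    hmeet A (hlew A a b) (hlew A a c) = hlew A a (hmeet A b c);
  lew_join : forall a b c,
    hmeet A (hlew A a c) (hlew A b c) = hlew A (hjoin A a b) c;
  lew_trans : forall a b c,
    hle A (hmeet A (hlew A a b) (hlew A b c)) (hlew A a c);
  lew_refl : forall a, hlew A a a = htop A }.

Record isHom (A B : HLAraw) (f : hcar A -> hcar B) : Prop := {
  hom_meet : forall a b, f (hmeet A a b) = hmeet B (f a) (f b);
  hom_join : forall a b, f (hjoin A a b) = hjoin B (f a) (f b);
  hom_imp  : forall a b, f (himp A a b) = himp B (f a) (f b);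
  hom_lew  : forall a b, f (hlew A a b) = hlew B (f a) (f b);
  hom_top  : f (htop A) = htop B;
  hom_bot  : f (hbot A) = hbot B }.

Record Hom (A B : HLAraw) := mkHom {
  homf :> hcar A -> hcar B;
  homP : isHom A B homf }.

Record primef (A : HLAraw) (p : hcar A -> Prop) : Prop := {
  pf_up   : forall a b, hle A a b -> p a -> p b;
  pf_meet : forall a b, p a -> p b -> p (hmeet A a b);
  pf_top  : p (htop A);
  pf_bot  : ~ p (hbot A);
  pf_prime : forall a b, p (hjoin A a b) -> p a \/ p b }.

Record Fraw := mkFr {
  fcar : Type;
  fle : fcar -> fcar -> Prop;
  fsq : fcar -> fcar -> Prop;
  fP  : (fcar -> Prop) -> Prop }.        (* admissible sets *)

Definition sand {X : Type} (a b : X -> Prop) : X -> Prop := fun x => a x /\ b x.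
Definition sor  {X : Type} (a b : X -> Prop) : X -> Prop := fun x => a x \/ b x.
Definition simp (X : Fraw) (a b : fcar X -> Prop) : fcar X -> Prop :=
  fun x => forall y, fle X x y -> a y -> b y.
Definition slew (X : Fraw) (a b : fcar X -> Prop) : fcar X -> Prop :=
  fun x => forall y, fsq X x y -> a y -> b y.
Definition upset (X : Fraw) (a : fcar X -> Prop) : Prop :=
  forall x y, fle X x y -> a x -> a y.

Record isDescr (X : Fraw) : Prop := {
  d_refl : forall x, fle X x x;
  d_trans : forall x y z, fle X x y -> fle X y z -> fle X x z;
  d_antisym : forall x y, fle X x y -> fle X y x -> x = y;
  d_compat : forall x y z, fle X x y -> fsq X y z -> fsq X x z;
  d_upset : forall a, fP X a -> upset X a;
  d_full : fP X (fun _ => True);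
  d_empty : fP X (fun _ => False);
  d_and : forall a b, fP X a -> fP X b -> fP X (sand a b);
  d_or  : forall a b, fP X a -> fP X b -> fP X (sor a b);
  d_imp : forall a b, fP X a -> fP X b -> fP X (simp X a b);
  d_lew : forall a b, fP X a -> fP X b -> fP X (slew X a b);
  d_compact : forall F : (fcar X -> Prop) -> Prop,
      (forall s, F s -> fP X s \/ exists a, fP X a /\ s = (fun x => ~ a x)) ->
      (forall l : list (fcar X -> Prop),
          (forall s, In s l -> F s) -> exists x, forall s, In s l -> s x) ->
      exists x, forall s, F s -> s x;
  d_le_ref : forall x y, ~ fle X x y -> exists a, fP X a /\ a x /\ ~ a y;
  d_sq_ref : forall x y, ~ fsq X x y ->
      exists a b, fP X a /\ fP X b /\ slew X a b x /\ a y /\ ~ b y }.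

Record DFrame := mkDF { dfr :> Fraw; dax : isDescr dfr }.

Record isDMor (X Y : Fraw) (f : fcar X -> fcar Y) : Prop := {
  m_le_fwd : forall x y, fle X x y -> fle Y (f x) (f y);
  m_le_back : forall x z', fle Y (f x) z' -> exists z, fle X x z /\ f z = z';
  m_sq_fwd : forall x y, fsq X x y -> fsq Y (f x) (f y);
  m_sq_back : forall x z', fsq Y (f x) z' -> exists z, fsq X x z /\ f z = z';
  m_pre : forall a', fP Y a' -> fP X (fun x => a' (f x)) }.

Record DMor (X Y : DFrame) := mkDMor {
  dmf :> fcar X -> fcar Y;
  dmP : isDMor X Y dmf }.

Definition algOf (X : DFrame) : HLAraw :=
  @mkHLA {a : fcar X -> Prop | fP X a}
    (fun a b => exist _ (sand (proj1_sig a) (proj1_sig b))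
                  (d_and _ (dax X) _ _ (proj2_sig a) (proj2_sig b)))
    (fun a b => exist _ (sor (proj1_sig a) (proj1_sig b))
                  (d_or _ (dax X) _ _ (proj2_sig a) (proj2_sig b)))
    (fun a b => exist _ (simp X (proj1_sig a) (proj1_sig b))
                  (d_imp _ (dax X) _ _ (proj2_sig a) (proj2_sig b)))
    (fun a b => exist _ (slew X (proj1_sig a) (proj1_sig b))
                  (d_lew _ (dax X) _ _ (proj2_sig a) (proj2_sig b)))
    (exist _ (fun _ => True) (d_full _ (dax X)))
    (exist _ (fun _ => False) (d_empty _ (dax X))).

Definition algMor (X Y : DFrame) (f : DMor X Y) :
    hcar (algOf Y) -> hcar (algOf X) :=
  fun a => exist _ (fun x => proj1_sig a (f x))
                 (m_pre _ _ _ (dmP _ _ f) _ (proj2_sig a)).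

Definition frmOf (A : HLAraw) : Fraw :=
  @mkFr {p : hcar A -> Prop | primef A p}
    (fun p q => forall a, proj1_sig p a -> proj1_sig q a)
    (fun p q => forall a b, proj1_sig p (hlew A a b) -> proj1_sig q a ->
                            proj1_sig q b)
    (fun S => exists a, S = (fun p => proj1_sig p a)).

Lemma primef_pre (A B : HLAraw) (h : Hom A B) (q : hcar B -> Prop) :
  primef B q -> primef A (fun a => q (h a)).
Proof.
  intros [up mt tp bt pr]. destruct h as [f Hf]; simpl; destruct Hf as [hm hj hi hl ht hb].
  split.
  - intros a b Hab Ha. apply (up (f a)); [|exact Ha].
    unfold hle in *. rewrite <- hm, Hab. reflexivity.
  - intros a b Ha Hb. rewrite hm. apply mt; assumption.
  - rewrite ht. exact tp.
  - rewrite hb. exact bt.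
  - intros a b H. rewrite hj in H. apply pr. exact H.
Qed.

Definition frmMor (A B : HLAraw) (h : Hom A B) :
    fcar (frmOf B) -> fcar (frmOf A) :=
  fun q => exist _ (fun a => proj1_sig q (h a))
                 (primef_pre A B h _ (proj2_sig q)).

(* Main.v *)
Require Import Defs.
From Stdlib Require Import List Classical FunctionalExtensionality PropExtensionality ProofIrrelevance ClassicalEpsilon.
From mathcomp Require ssreflect ssrbool classical_sets boolp.

Module ZornW.
Import ssreflect ssrbool classical_sets boolp.
Lemma zorn_sets (T : Type) (P : (T -> Prop) -> Prop) :
  (forall F : (T->Prop) -> Prop, (forall K, F K -> P K) ->
     (forall K1 K2, F K1 -> F K2 -> (forall x, K1 x -> K2 x) \/ (forall x, K2 x -> K1 x)) ->
     P (fun x => exists K, F K /\ K x)) ->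
  exists A, P A /\ forall B, P B -> (forall x, A x -> B x) -> forall x, B x -> A x.
Proof.
move=> H.
case: (@Zorn_bigcup T P) => [F FP tot|A [PA max]].
  have -> : (\bigcup_(X in F) X)%classic = (fun x => exists K, F K /\ K x).
    apply/funext => x; apply/propext; split.
      by case=> K FK Kx; exists K.
    by case=> K [FK Kx]; exists K.
  apply: H => //.
exists A; split => // B PB AB x Bx.
apply: contrapT => nAx.
apply: (max B) => //; split => // BA.
exact: nAx (BA x Bx).
Qed.
End ZornW.

Lemma set_ext {T : Type} (s t : T -> Prop) : (forall x, s x <-> t x) -> s = t.
Proof. intro H. apply functional_extensionality; intro x. apply propositional_extensionality; apply H. Qed.

Lemma sig_ext {T : Type} {P : (T -> Prop) -> Prop} (x y : {a : T -> Prop | P a}) :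
  (forall t, proj1_sig x t <-> proj1_sig y t) -> x = y.
Proof.
  destruct x as [x Hx], y as [y Hy]; simpl; intro H.
  assert (E : x = y) by (apply set_ext; exact H). subst y.
  f_equal. apply proof_irrelevance.
Qed.

Section Dummy. End Dummy.

Lemma le_refl A (HA : isHLA A) a : hle A a a.
Proof.
  unfold hle. assert (E := meet_absorb _ HA a (hmeet A a a)).
  rewrite (join_absorb _ HA) in E. exact E.
Qed.

Lemma le_trans A (HA : isHLA A) a b c : hle A a b -> hle A b c -> hle A a c.
Proof.
  unfold hle; intros H1 H2. rewrite <- H1, <- (meetA _ HA), H2. reflexivity.
Qed.

Lemma le_antisym A (HA : isHLA A) a b : hle A a b -> hle A b a -> a = b.
Proof. unfold hle; intros H1 H2. transitivity (hmeet A a b); [symmetry; exact H1|].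
  rewrite (meetC _ HA); exact H2. Qed.

Lemma meet_lb1 A (HA : isHLA A) a b : hle A (hmeet A a b) a.
Proof.
  unfold hle. rewrite <- (meetA _ HA), (meetC _ HA b a), (meetA _ HA).
  rewrite (le_refl A HA a). reflexivity.
Qed.

Lemma meet_lb2 A (HA : isHLA A) a b : hle A (hmeet A a b) b.
Proof.
  unfold hle. rewrite <- (meetA _ HA), (le_refl A HA b). reflexivity.
Qed.

Lemma meet_glb A (HA : isHLA A) a b c : hle A c a -> hle A c b -> hle A c (hmeet A a b).
Proof. unfold hle; intros H1 H2. rewrite (meetA _ HA), H1, H2. reflexivity. Qed.

Lemma le_join A (HA : isHLA A) a b : hle A a b -> hjoin A a b = b.
Proof.
  unfold hle; intro H. rewrite <- H, (joinC _ HA), (meetC _ HA). apply (join_absorb _ HA).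
Qed.

Lemma join_le A (HA : isHLA A) a b : hjoin A a b = b -> hle A a b.
Proof. unfold hle; intro H. rewrite <- H. apply (meet_absorb _ HA). Qed.

Lemma join_ub1 A (HA : isHLA A) a b : hle A a (hjoin A a b).
Proof. apply (meet_absorb _ HA). Qed.

Lemma join_ub2 A (HA : isHLA A) a b : hle A b (hjoin A a b).
Proof. rewrite (joinC _ HA). apply (meet_absorb _ HA). Qed.

Lemma join_lub A (HA : isHLA A) a b c : hle A a c -> hle A b c -> hle A (hjoin A a b) c.
Proof.
  intros H1 H2. apply join_le; auto. rewrite <- (joinA _ HA), (le_join A HA _ _ H2).
  apply le_join; auto.
Qed.

Lemma bot_le A (HA : isHLA A) a : hle A (hbot A) a.
Proof.
  unfold hle. rewrite <- (meet_absorb _ HA (hbot A) a) at 2.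
  rewrite (joinC _ HA), (join_bot _ HA). reflexivity.
Qed.

Lemma le_top A (HA : isHLA A) a : hle A a (htop A).
Proof. apply (meet_top _ HA). Qed.

Lemma imp_mp A (HA : isHLA A) a b : hle A (hmeet A a (himp A a b)) b.
Proof.
  rewrite (meetC _ HA). apply (imp_res _ HA). apply le_refl; auto.
Qed.

Lemma distr A (HA : isHLA A) u v w :
  hle A (hmeet A u (hjoin A v w)) (hjoin A (hmeet A u v) (hmeet A u w)).
Proof.
  rewrite (meetC _ HA). apply (imp_res _ HA). apply join_lub; auto.
  - apply (imp_res _ HA). rewrite (meetC _ HA). apply join_ub1; auto.
  - apply (imp_res _ HA). rewrite (meetC _ HA). apply join_ub2; auto.
Qed.

Lemma join_mono A (HA : isHLA A) a a' b b' :
  hle A a a' -> hle A b b' -> hle A (hjoin A a b) (hjoin A a' b').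
Proof.
  intros. apply join_lub; auto.
  - eapply le_trans; eauto. apply join_ub1; auto.
  - eapply le_trans; eauto. apply join_ub2; auto.
Qed.

Lemma meet_mono A (HA : isHLA A) a a' b b' :
  hle A a a' -> hle A b b' -> hle A (hmeet A a b) (hmeet A a' b').
Proof.
  intros. apply meet_glb; auto.
  - eapply le_trans; eauto. apply meet_lb1; auto.
  - eapply le_trans; eauto. apply meet_lb2; auto.
Qed.

Lemma distr2 A (HA : isHLA A) j x y :
  hle A (hmeet A (hjoin A j x) (hjoin A j y)) (hjoin A j (hmeet A x y)).
Proof.
  eapply le_trans; [auto|apply distr; auto|]. apply join_lub; auto.
  - eapply le_trans; [auto|apply meet_lb2; auto|]. apply join_ub1; auto.
  - rewrite (meetC _ HA). eapply le_trans; [auto|apply distr; auto|]. apply join_lub; auto.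
    + eapply le_trans; [auto|apply meet_lb2; auto|]. apply join_ub1; auto.
    + eapply le_trans; [auto| |apply join_ub2; auto]. rewrite (meetC _ HA). apply le_refl; auto.
Qed.

Lemma lew_mono2 A (HA : isHLA A) e c d : hle A c d -> hle A (hlew A e c) (hlew A e d).
Proof. unfold hle; intro H. rewrite (lew_meet _ HA), H. reflexivity. Qed.

Lemma lew_anti1 A (HA : isHLA A) c c' d : hle A c' c -> hle A (hlew A c d) (hlew A c' d).
Proof.
  unfold hle; intro H. rewrite (lew_join _ HA). f_equal. rewrite (joinC _ HA).
  apply le_join; auto.
Qed.

Record Rrel (A : HLAraw) (R : hcar A -> hcar A -> Prop) : Prop := {
  R_refl : forall c, R c c;
  R_trans : forall c d e, R c d -> R d e -> R c e;
  R_anti : forall c c' d, hle A c' c -> R c d -> R c' d;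
  R_mono : forall c d d', hle A d d' -> R c d -> R c d';
  R_meet : forall c d1 d2, R c d1 -> R c d2 -> R c (hmeet A d1 d2);
  R_join : forall c1 c2 d, R c1 d -> R c2 d -> R (hjoin A c1 c2) d }.

Lemma Rrel_le A (HA : isHLA A) : Rrel A (hle A).
Proof.
  split.
  - apply le_refl; auto.
  - intros; eapply le_trans; eauto.
  - intros; eapply le_trans; eauto.
  - intros; eapply le_trans; eauto.
  - intros; apply meet_glb; auto.
  - intros; apply join_lub; auto.
Qed.

Lemma Rrel_lew A (HA : isHLA A) q : primef A q -> Rrel A (fun c d => q (hlew A c d)).
Proof.
  intros [up mt tp bt pr]. split.
  - intros c. rewrite (lew_refl _ HA). exact tp.
  - intros c d e H1 H2. eapply up; [apply (lew_trans _ HA c d e)|]. apply mt; auto.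
  - intros x y z H H1. eapply up; [apply lew_anti1; eauto|]. auto.
  - intros x y z H H1. eapply up; [apply lew_mono2; eauto|]. auto.
  - intros c d1 d2 H1 H2. rewrite <- (lew_meet _ HA). apply mt; auto.
  - intros c1 c2 d H1 H2. rewrite <- (lew_join _ HA). apply mt; auto.
Qed.

Definition Id A (R : hcar A -> hcar A -> Prop) (G J0 J : hcar A -> Prop) : Prop :=
  (forall a, J0 a -> J a) /\ (forall a b, hle A a b -> J b -> J a) /\
  (forall a b, J a -> J b -> J (hjoin A a b)) /\ (forall c d, R c d -> J d -> J c) /\
  (forall a, G a -> J a -> False).

Lemma Id_ext A R G J0 J J' : Id A R G J0 J -> (forall x, J x <-> J' x) -> Id A R G J0 J'.
Proof.
  intros [h1 [h2 [h3 [h4 h5]]]] E. repeat split.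
  - intros; apply E; auto.
  - intros a b H Hb. apply E. apply (h2 a b); [auto|apply E; auto].
  - intros a b Ha Hb. apply E. apply h3; apply E; auto.
  - intros c d H Hd. apply E. apply (h4 c d); [auto|apply E; auto].
  - intros a Ga Ja. apply (h5 a); [auto|apply E; auto].
Qed.

Lemma pft A (HA : isHLA A) R (HR : Rrel A R) (G J0 : hcar A -> Prop) :
  (forall a b, G a -> G b -> G (hmeet A a b)) -> G (htop A) ->
  (forall a b, hle A a b -> J0 b -> J0 a) -> (forall a b, J0 a -> J0 b -> J0 (hjoin A a b)) ->
  J0 (hbot A) -> (forall c d, R c d -> J0 d -> J0 c) -> (forall a, G a -> J0 a -> False) ->
  exists z, primef A z /\ (forall a, G a -> z a) /\ (forall a, J0 a -> ~ z a) /\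
            (forall c d, R c d -> z c -> z d).
Proof.
  intros Gm Gt Jd Jj Jb JR GJ.
  destruct (ZornW.zorn_sets _ (fun K => Id A R G J0 (fun x => K x \/ J0 x))) as [M0 [PM maxM]].
  { intros F FP tot. repeat split.
    - intros a Ha; right; exact Ha.
    - intros a b H [[K [FK Kb]]|Jb0].
      + destruct (FP K FK) as [_ [h2 _]]. destruct (h2 a b H (or_introl Kb)) as [Ka|Ja].
        * left; exists K; auto.
        * right; auto.
      + right; eauto.
    - intros a b [[K1 [F1 K1a]]|J1] [[K2 [F2 K2b]]|J2].
      + destruct (tot K1 K2 F1 F2) as [S|S].
        * destruct (FP K2 F2) as [_ [_ [h3 _]]].
          destruct (h3 a b (or_introl (S a K1a)) (or_introl K2b)) as [K|J]; [left; exists K2; auto|right; auto].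
        * destruct (FP K1 F1) as [_ [_ [h3 _]]].
          destruct (h3 a b (or_introl K1a) (or_introl (S b K2b))) as [K|J]; [left; exists K1; auto|right; auto].
      + destruct (FP K1 F1) as [_ [_ [h3 _]]].
        destruct (h3 a b (or_introl K1a) (or_intror J2)) as [K|J]; [left; exists K1; auto|right; auto].
      + destruct (FP K2 F2) as [_ [_ [h3 _]]].
        destruct (h3 a b (or_intror J1) (or_introl K2b)) as [K|J]; [left; exists K2; auto|right; auto].
      + right; auto.
    - intros c d H [[K [FK Kd]]|Jd0].
      + destruct (FP K FK) as [_ [_ [_ [h4 _]]]]. destruct (h4 c d H (or_introl Kd)) as [K'|J].
        * left; exists K; auto.
        * right; auto.
      + right; eauto.
    - intros a Ga [[K [FK Ka]]|Ja].
      + destruct (FP K FK) as [_ [_ [_ [_ h5]]]]. eapply h5; eauto.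
      + eauto. }
  set (M := fun x => M0 x \/ J0 x) in *.
  assert (maxM' : forall K, Id A R G J0 K -> (forall x, M x -> K x) -> forall x, K x -> M x).
  { intros K IK MK x Kx. left. apply (maxM K).
    - eapply Id_ext; [exact IK|]. intro y; split; [intro; left; auto|].
      intros [Ky|Jy]; auto. destruct IK as [h1 _]; auto.
    - intros y Hy; apply MK; left; auto.
    - auto. }
  assert (IM : Id A R G J0 M) by exact PM.
  destruct IM as [MJ0 [Md [Mj [MR MG]]]].
  assert (Mbot : M (hbot A)) by auto.
  assert (Kx : forall x, ~ M x -> exists g j, G g /\ M j /\ R g (hjoin A j x)).
  { intros x nMx. apply NNPP; intro NE. apply nMx.
    apply (maxM' (fun c => exists j, M j /\ R c (hjoin A j x))).
    - repeat split.
      + intros a Ja. exists a; split; auto. eapply R_mono; [eauto| |apply R_refl; auto].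
        apply join_ub1; auto.
      + intros a b H [j [Mj' Rb]]. exists j; split; auto. eapply R_anti; eauto.
      + intros a b [j1 [M1 R1]] [j2 [M2 R2]]. exists (hjoin A j1 j2); split; auto.
        apply R_join; auto.
        * eapply R_mono; [eauto| |exact R1]. apply join_mono; auto; [apply join_ub1; auto|apply le_refl; auto].
        * eapply R_mono; [eauto| |exact R2]. apply join_mono; auto; [apply join_ub2; auto|apply le_refl; auto].
      + intros c d H [j [Mj' Rd]]. exists j; split; auto. eapply R_trans; eauto.
      + intros a Ga [j [Mj' Ra]]. apply NE. exists a, j; auto.
    - intros a Ma. exists a; split; auto. eapply R_mono; [eauto| |apply R_refl; auto].
      apply join_ub1; auto.
    - exists (hbot A); split; auto. eapply R_mono; [eauto| |apply R_refl; auto].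
      apply join_ub2; auto. }
  assert (Mprime : forall x y, ~ M x -> ~ M y -> ~ M (hmeet A x y)).
  { intros x y nx ny Mxy.
    destruct (Kx x nx) as [g1 [j1 [G1 [M1 R1]]]].
    destruct (Kx y ny) as [g2 [j2 [G2 [M2 R2]]]].
    apply (MG (hmeet A g1 g2)); [auto|].
    apply (MR _ (hjoin A (hjoin A j1 j2) (hmeet A x y))); [|auto].
    eapply R_mono; [eauto|apply distr2; auto|]. apply R_meet; auto.
    - eapply R_anti; [eauto|apply meet_lb1; auto|]. eapply R_mono; [eauto| |exact R1].
      apply join_mono; auto; [apply join_ub1; auto|apply le_refl; auto].
    - eapply R_anti; [eauto|apply meet_lb2; auto|]. eapply R_mono; [eauto| |exact R2].
      apply join_mono; auto; [apply join_ub2; auto|apply le_refl; auto]. }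
  exists (fun a => ~ M a). repeat split.
  - intros a b H na Mb. apply na. eapply Md; eauto.
  - exact Mprime.
  - intro Mt. eapply MG; eauto.
  - intro nb. apply nb; auto.
  - intros a b nab. apply NNPP; intro N. apply nab. apply Mj; apply NNPP; intro; apply N; auto.
  - intros a Ga Ma. eapply MG; eauto.
  - intros a Ja nMa. apply nMa; auto.
  - intros c d H nc Md'. apply nc. eapply MR; eauto.
Qed.

Definition tl (A : HLAraw) (a : hcar A) : fcar (frmOf A) -> Prop :=
  fun p => proj1_sig p a.

Definition mkpf (A : HLAraw) (z : hcar A -> Prop) (Hz : primef A z) : fcar (frmOf A) :=
  exist _ z Hz.

Lemma pf_meet_iff A (HA : isHLA A) (p : hcar A -> Prop) a b :
  primef A p -> (p (hmeet A a b) <-> p a /\ p b).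
Proof.
  intros Hp; split.
  - intro H; split; eapply (pf_up _ _ Hp); eauto; [apply meet_lb1|apply meet_lb2]; auto.
  - intros [Ha Hb]; apply (pf_meet _ _ Hp); auto.
Qed.

Lemma pf_join_iff A (HA : isHLA A) (p : hcar A -> Prop) a b :
  primef A p -> (p (hjoin A a b) <-> p a \/ p b).
Proof.
  intros Hp; split.
  - apply (pf_prime _ _ Hp).
  - intros [H|H]; eapply (pf_up _ _ Hp); eauto; [apply join_ub1|apply join_ub2]; auto.
Qed.

Lemma L_and A (HA : isHLA A) a b : tl A (hmeet A a b) = sand (tl A a) (tl A b).
Proof. apply set_ext; intros [p Hp]; unfold tl, sand; simpl. apply pf_meet_iff; auto. Qed.

Lemma L_or A (HA : isHLA A) a b : tl A (hjoin A a b) = sor (tl A a) (tl A b).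
Proof. apply set_ext; intros [p Hp]; unfold tl, sor; simpl. apply pf_join_iff; auto. Qed.

Lemma L_top A (HA : isHLA A) : tl A (htop A) = (fun _ => True).
Proof. apply set_ext; intros [p Hp]; unfold tl; simpl. split; auto. intros; apply (pf_top _ _ Hp). Qed.

Lemma L_bot A (HA : isHLA A) : tl A (hbot A) = (fun _ => False).
Proof. apply set_ext; intros [p Hp]; unfold tl; simpl. split; [apply (pf_bot _ _ Hp)|tauto]. Qed.

Lemma L_imp A (HA : isHLA A) a b :
  simp (frmOf A) (tl A a) (tl A b) = tl A (himp A a b).
Proof.
  apply set_ext; intros [x Hx]; unfold tl, simp; simpl. split.
  - intro H. apply NNPP; intro N.
    destruct (pft A HA (hle A) (Rrel_le A HA)
       (fun y => exists c, x c /\ hle A (hmeet A c a) y) (fun y => hle A y b))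
      as [z [Hz [Gz [Jz Rz]]]].
    + intros y1 y2 [c1 [X1 L1]] [c2 [X2 L2]]. exists (hmeet A c1 c2); split.
      * apply (pf_meet _ _ Hx); auto.
      * apply meet_glb; auto; (eapply le_trans; [auto| |eauto]); apply meet_mono; auto;
          try apply le_refl; auto; [apply meet_lb1|apply meet_lb2]; auto.
    + exists (htop A); split; [apply (pf_top _ _ Hx)|apply le_top; auto].
    + intros; eapply le_trans; eauto.
    + intros; apply join_lub; auto.
    + apply bot_le; auto.
    + intros; eapply le_trans; eauto.
    + intros y [c [Xc Lc]] Ly. apply N. eapply (pf_up _ _ Hx); [|exact Xc].
      apply (imp_res _ HA). eapply le_trans; eauto.
    + apply (Jz b); [apply le_refl; auto|].
      apply (H (mkpf A z Hz)); simpl.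
      * intros c Xc. apply Gz. exists c; split; auto. apply meet_lb1; auto.
      * apply Gz. exists (htop A); split; [apply (pf_top _ _ Hx)|].
        apply meet_lb2; auto.
  - intros H [y Hy] Le Ya; simpl in *. eapply (pf_up _ _ Hy); [apply (imp_mp _ HA a b)|].
    apply (pf_meet _ _ Hy); auto.
Qed.

Lemma lew_bot A (HA : isHLA A) b : hlew A (hbot A) b = htop A.
Proof.
  apply le_antisym; auto; [apply le_top; auto|].
  rewrite <- (lew_refl _ HA (hbot A)). apply lew_mono2; auto. apply bot_le; auto.
Qed.

Lemma L_lew A (HA : isHLA A) a b :
  slew (frmOf A) (tl A a) (tl A b) = tl A (hlew A a b).
Proof.
  apply set_ext; intros [x Hx]; unfold tl, slew; simpl. split.
  - intro H. apply NNPP; intro N.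
    destruct (pft A HA _ (Rrel_lew A HA x Hx)
       (fun y => hle A a y) (fun c => x (hlew A c b)))
      as [z [Hz [Gz [Jz Rz]]]].
    + intros; apply meet_glb; auto.
    + apply le_top; auto.
    + intros c d L Xd. eapply (pf_up _ _ Hx); [apply lew_anti1; eauto|auto].
    + intros c d Xc Xd. rewrite <- (lew_join _ HA). apply (pf_meet _ _ Hx); auto.
    + rewrite lew_bot; auto. apply (pf_top _ _ Hx).
    + intros c d X1 X2. apply (R_trans _ _ (Rrel_lew A HA x Hx) c d b); auto.
    + intros y Ly Xy. apply N. eapply (pf_up _ _ Hx); [apply lew_anti1; eauto|auto].
    + apply (Jz b); [rewrite (lew_refl _ HA); apply (pf_top _ _ Hx)|].
      apply (H (mkpf A z Hz)); simpl.
      * intros c d Xcd Zc. eapply Rz; eauto.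
      * apply Gz. apply le_refl; auto.
  - intros H [y Hy] Sq Ya; simpl in *. eapply Sq; eauto.
Qed.

Lemma sep A (HA : isHLA A) a b : ~ hle A a b ->
  exists z : fcar (frmOf A), proj1_sig z a /\ ~ proj1_sig z b.
Proof.
  intro N.
  destruct (pft A HA (hle A) (Rrel_le A HA) (fun y => hle A a y) (fun y => hle A y b))
    as [z [Hz [Gz [Jz Rz]]]].
  - intros; apply meet_glb; auto.
  - apply le_top; auto.
  - intros; eapply le_trans; eauto.
  - intros; apply join_lub; auto.
  - apply bot_le; auto.
  - intros; eapply le_trans; eauto.
  - intros y L1 L2. apply N. eapply le_trans; eauto.
  - exists (mkpf A z Hz); simpl. split.
    + apply Gz; apply le_refl; auto.
    + apply Jz; apply le_refl; auto.
Qed.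

Lemma L_inj A (HA : isHLA A) a b : tl A a = tl A b -> a = b.
Proof.
  intro E. apply le_antisym; auto; apply NNPP; intro N;
    destruct (sep A HA _ _ N) as [z [Z1 Z2]]; apply Z2.
  - change (tl A b z). rewrite <- E. exact Z1.
  - change (tl A a z). rewrite E. exact Z1.
Qed.

Definition meetl A (l : list (hcar A)) := fold_right (hmeet A) (htop A) l.
Definition joinl A (l : list (hcar A)) := fold_right (hjoin A) (hbot A) l.

Lemma meetl_lb A (HA : isHLA A) l a : In a l -> hle A (meetl A l) a.
Proof.
  induction l as [|c l IH]; simpl; [tauto|]. intros [E|I].
  - subst; apply meet_lb1; auto.
  - eapply le_trans; [auto|apply meet_lb2; auto|auto].
Qed.

Lemma meetl_glb A (HA : isHLA A) l c : (forall a, In a l -> hle A c a) -> hle A c (meetl A l).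
Proof.
  induction l as [|d l IH]; simpl; intros H; [apply le_top; auto|].
  apply meet_glb; auto.
Qed.

Lemma joinl_ub A (HA : isHLA A) l a : In a l -> hle A a (joinl A l).
Proof.
  induction l as [|c l IH]; simpl; [tauto|]. intros [E|I].
  - subst; apply join_ub1; auto.
  - eapply le_trans; [auto|apply IH; auto|apply join_ub2; auto].
Qed.

Lemma joinl_lub A (HA : isHLA A) l c : (forall a, In a l -> hle A a c) -> hle A (joinl A l) c.
Proof.
  induction l as [|d l IH]; simpl; intros H; [apply bot_le; auto|].
  apply join_lub; auto.
Qed.

Lemma pf_meetl A (p : hcar A -> Prop) l : primef A p -> (forall a, In a l -> p a) -> p (meetl A l).
Proof.
  intro Hp; induction l; simpl; intros H; [apply (pf_top _ _ Hp)|].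
  apply (pf_meet _ _ Hp); auto.
Qed.

Lemma pf_joinl A (p : hcar A -> Prop) l : primef A p -> p (joinl A l) -> exists b, In b l /\ p b.
Proof.
  intro Hp; induction l; simpl; intros H; [destruct (pf_bot _ _ Hp H)|].
  destruct (pf_prime _ _ Hp _ _ H) as [H1|H1]; [exists a; auto|].
  destruct (IHl H1) as [b [I Pb]]; exists b; auto.
Qed.

Lemma frm_descr A (HA : isHLA A) : isDescr (frmOf A).
Proof.
  split.
  - intros x a; auto.
  - intros x y z H1 H2 a Ha; auto.
  - intros x y H1 H2. apply sig_ext. intro; split; auto.
  - intros x y z H1 H2 a b Hab Hz. eapply H2; eauto.
  - intros s [a E] x y Le Hx; subst; simpl in *; auto.
  - exists (htop A). symmetry. apply (L_top A HA).
  - exists (hbot A). symmetry. apply (L_bot A HA).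
  - intros s t [a Ea] [b Eb]; subst. exists (hmeet A a b). symmetry; apply (L_and A HA).
  - intros s t [a Ea] [b Eb]; subst. exists (hjoin A a b). symmetry; apply (L_or A HA).
  - intros s t [a Ea] [b Eb]; subst. exists (himp A a b). exact (L_imp A HA a b).
  - intros s t [a Ea] [b Eb]; subst. exists (hlew A a b). exact (L_lew A HA a b).
  - intros F HF Hfin.
    destruct (pft A HA (hle A) (Rrel_le A HA)
      (fun y => exists l, (forall a, In a l -> F (tl A a)) /\ hle A (meetl A l) y)
      (fun y => exists l, (forall b, In b l -> F (fun x => ~ tl A b x)) /\ hle A y (joinl A l)))
      as [z [Hz [Gz [Jz Rz]]]].
    + intros y1 y2 [l1 [F1 L1]] [l2 [F2 L2]]. exists (l1 ++ l2); split.
      * intros a I; apply in_app_or in I; destruct I; auto.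
      * apply meet_glb; auto; (eapply le_trans; [auto| |eauto]); apply meetl_glb; auto;
        intros; apply meetl_lb; auto; apply in_or_app; auto.
    + exists nil; split; [simpl; tauto|apply le_refl; auto].
    + intros a b L [l [F1 L1]]. exists l; split; auto. eapply le_trans; eauto.
    + intros y1 y2 [l1 [F1 L1]] [l2 [F2 L2]]. exists (l1 ++ l2); split.
      * intros a I; apply in_app_or in I; destruct I; auto.
      * apply join_lub; auto; (eapply le_trans; [auto|eauto|]); apply joinl_lub; auto;
        intros; apply joinl_ub; auto; apply in_or_app; auto.
    + exists nil; split; [simpl; tauto|apply le_refl; auto].
    + intros a b L [l [F1 L1]]. exists l; split; auto. eapply le_trans; eauto.
    + intros y [l1 [F1 L1]] [l2 [F2 L2]].
      destruct (Hfin (map (tl A) l1 ++ map (fun b => fun x => ~ tl A b x) l2)) as [x Hx].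
      * intros s I. apply in_app_or in I. destruct I as [I|I]; apply in_map_iff in I;
          destruct I as [c [E I]]; subst; auto.
      * assert (M1 : tl A (meetl A l1) x).
        { apply pf_meetl; [exact (proj2_sig x)|]. intros a I. apply (Hx (tl A a)).
          apply in_or_app; left. apply in_map; auto. }
        assert (M2 : tl A (joinl A l2) x).
        { eapply (pf_up _ _ (proj2_sig x)); [|exact M1]. eapply le_trans; eauto. }
        destruct (pf_joinl A _ l2 (proj2_sig x) M2) as [b [I Pb]].
        apply (Hx (fun x => ~ tl A b x)); auto.
        apply in_or_app; right. apply (in_map (fun b => fun x => ~ tl A b x)); auto.
    + exists (mkpf A z Hz). intros s Fs. destruct (HF s Fs) as [[a E]|[a [[b E] E']]]; subst.
      * simpl. apply Gz. exists (a :: nil); split.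
        -- intros c [E|[]]; subst; auto.
        -- apply meet_lb1; auto.
      * simpl. apply Jz. exists (b :: nil); split.
        -- intros c [E|[]]; subst; auto.
        -- apply join_ub1; auto.
  - intros x y N. apply not_all_ex_not in N. destruct N as [a N].
    exists (tl A a); split; [exists a; auto|]. unfold tl. tauto.
  - intros x y N. apply not_all_ex_not in N. destruct N as [a N].
    apply not_all_ex_not in N. destruct N as [b N].
    exists (tl A a), (tl A b). split; [exists a; auto|]. split; [exists b; auto|].
    unfold tl, slew. simpl. split; [|tauto]. intros y' Sq Ya. eapply Sq; eauto. tauto.
Qed.

Lemma hle_alg (X : DFrame) (a b : hcar (algOf X)) :
  hle (algOf X) a b <-> (forall x, proj1_sig a x -> proj1_sig b x).
Proof.
  unfold hle; split.
  - intros E x Ha. assert (E' := f_equal (fun s => proj1_sig s x) E). simpl in E'.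
    unfold sand in E'. rewrite <- E' in Ha. tauto.
  - intros H. apply sig_ext. simpl. unfold sand. intro t; split; [tauto|auto].
Qed.

Lemma alg_HLA (X : DFrame) : isHLA (algOf X).
Proof.
  split; intros; try (apply sig_ext; simpl; unfold sand, sor, simp, slew; intros; tauto).
  - rewrite !hle_alg; simpl; unfold sand, simp. split.
    + intros H x Ax y Le By. apply H. split; auto. eapply (d_upset _ (dax X)); eauto. exact (proj2_sig a).
    + intros H x [Ax Bx]. eapply H; eauto. apply (d_refl _ (dax X)).
  - apply sig_ext; simpl; unfold sand, slew. intro t; split.
    + intros [H1 H2] y S Ay; split; eauto.
    + intros H; split; intros y S Z; apply H; auto.
  - apply sig_ext; simpl; unfold sand, sor, slew. intro t; split.
    + intros [H1 H2] y S [Ay|By]; eauto.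
    + intros H; split; intros y S Z; apply H; auto.
  - rewrite hle_alg; simpl; unfold sand, slew. intros x [H1 H2] y S Ay. eauto.
Qed.

Lemma alg_hom (X Y : DFrame) (f : DMor X Y) : isHom (algOf Y) (algOf X) (algMor X Y f).
Proof.
  destruct f as [f [lf lb sf sb pre]]. split; intros; apply sig_ext; simpl;
    unfold sand, sor, simp, slew; intro t; try tauto.
  - split.
    + intros H y Le Ay. apply (H (f y)); auto.
    + intros H z' Le Az. destruct (lb _ _ Le) as [z [Le' E]]. subst. auto.
  - split.
    + intros H y Le Ay. apply (H (f y)); auto.
    + intros H z' Le Az. destruct (sb _ _ Le) as [z [Le' E]]. subst. auto.
Qed.

Lemma frm_hom A B (h : Hom A B) (HA : isHLA A) (HB : isHLA B) :
  isDMor (frmOf B) (frmOf A) (frmMor A B h).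
Proof.
  destruct h as [f [hm hj hi hl ht hb]].
  split.
  - intros x y H a; simpl; auto.
  - intros [q Hq] [p' Hp'] Le; simpl in *.
    destruct (pft B HB (hle B) (Rrel_le B HB)
      (fun y => exists c a, q c /\ p' a /\ hle B (hmeet B c (f a)) y)
      (fun y => exists b, ~ p' b /\ hle B y (f b))) as [z [Hz [Gz [Jz Rz]]]].
    + intros y1 y2 [c1 [a1 [Q1 [P1 L1]]]] [c2 [a2 [Q2 [P2 L2]]]].
      exists (hmeet B c1 c2), (hmeet A a1 a2). split; [apply (pf_meet _ _ Hq); auto|].
      split; [apply (pf_meet _ _ Hp'); auto|]. rewrite hm.
      apply meet_glb; auto; (eapply le_trans; [auto| |eauto]); apply meet_mono; auto;
        [apply meet_lb1|apply meet_lb1|apply meet_lb2|apply meet_lb2]; auto.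
    + exists (htop B), (htop A). split; [apply (pf_top _ _ Hq)|]. split; [apply (pf_top _ _ Hp')|].
      apply le_top; auto.
    + intros a b L [b' [N L']]. exists b'; split; auto. eapply le_trans; eauto.
    + intros y1 y2 [b1 [N1 L1]] [b2 [N2 L2]]. exists (hjoin A b1 b2). split.
      * intro P. destruct (pf_prime _ _ Hp' _ _ P); auto.
      * rewrite hj. apply join_mono; auto.
    + exists (hbot A); split; [apply (pf_bot _ _ Hp')|]. rewrite hb. apply le_refl; auto.
    + intros c d L [b' [N L']]. exists b'; split; auto. eapply le_trans; eauto.
    + intros y [c [a [Qc [Pa L1]]]] [b [Nb L2]]. apply Nb.
      assert (Q : q (f (himp A a b))).
      { rewrite hi. eapply (pf_up _ _ Hq); [|exact Qc]. apply (imp_res _ HB).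
        apply (le_trans B HB _ y); auto. }
      apply Le in Q. apply (pf_up _ _ Hp' _ _ (imp_mp _ HA a b)).
      apply (pf_meet _ _ Hp'); auto.
    + exists (mkpf B z Hz). simpl. split.
      * intros c Qc. apply Gz. exists c, (htop A). split; auto. split; [apply (pf_top _ _ Hp')|].
        apply meet_lb1; auto.
      * apply sig_ext; simpl. intro a. split.
        -- intro Z. apply NNPP; intro N. apply (Jz (f a)); auto. exists a; split; auto.
           apply le_refl; auto.
        -- intro Pa. apply Gz. exists (htop B), a. split; [apply (pf_top _ _ Hq)|]. split; auto.
           apply meet_lb2; auto.
  - intros x y S a b; simpl. rewrite hl. apply S.
  - intros [q Hq] [p' Hp'] Sq; simpl in *.
    destruct (pft B HB _ (Rrel_lew B HB q Hq)
      (fun y => exists a, p' a /\ hle B (f a) y)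
      (fun c => exists b, ~ p' b /\ q (hlew B c (f b)))) as [z [Hz [Gz [Jz Rz]]]].
    + intros y1 y2 [a1 [P1 L1]] [a2 [P2 L2]]. exists (hmeet A a1 a2).
      split; [apply (pf_meet _ _ Hp'); auto|]. rewrite hm. apply meet_mono; auto.
    + exists (htop A). split; [apply (pf_top _ _ Hp')|]. apply le_top; auto.
    + intros c d L [b [N Q]]. exists b; split; auto. eapply (pf_up _ _ Hq); [apply lew_anti1; eauto|auto].
    + intros c1 c2 [b1 [N1 Q1]] [b2 [N2 Q2]]. exists (hjoin A b1 b2). split.
      * intro P. destruct (pf_prime _ _ Hp' _ _ P); auto.
      * rewrite hj, <- (lew_join _ HB). apply (pf_meet _ _ Hq).
        -- eapply (pf_up _ _ Hq); [apply lew_mono2; [auto|apply join_ub1; auto]|auto].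
        -- eapply (pf_up _ _ Hq); [apply lew_mono2; [auto|apply join_ub2; auto]|auto].
    + exists (hbot A). split; [apply (pf_bot _ _ Hp')|]. rewrite lew_bot; auto. apply (pf_top _ _ Hq).
    + intros c d Q1 [b [N Q2]]. exists b; split; auto.
      apply (R_trans _ _ (Rrel_lew B HB q Hq) c d (f b)); auto.
    + intros y [a [Pa L]] [b [Nb Q]]. apply Nb. apply (Sq a b); auto.
      rewrite hl. eapply (pf_up _ _ Hq); [apply lew_anti1; eauto|auto].
    + exists (mkpf B z Hz). simpl. split.
      * intros c d Q Zc. eapply Rz; eauto.
      * apply sig_ext; simpl. intro a. split.
        -- intro Z. apply NNPP; intro N. apply (Jz (f a)); auto. exists a; split; auto.
           rewrite (lew_refl _ HB). apply (pf_top _ _ Hq).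
        -- intro Pa. apply Gz. exists a. split; auto. apply le_refl; auto.
  - intros s [a E]; subst. exists (f a). reflexivity.
Qed.

Lemma sig_eq_of {T : Type} {P : (T -> Prop) -> Prop} (x y : {a : T -> Prop | P a}) :
  proj1_sig x = proj1_sig y -> x = y.
Proof. intro E; apply sig_ext; intro t; rewrite E; tauto. Qed.

Definition etaf (A : HLAraw) (hd : isDescr (frmOf A)) (a : hcar A) :
  hcar (algOf (mkDF (frmOf A) hd)) :=
  exist _ (tl A a) (ex_intro _ a eq_refl).

Lemma hom_inv A B (e : hcar A -> hcar B) (g : hcar B -> hcar A) :
  isHom A B e -> (forall a, g (e a) = a) -> (forall b, e (g b) = b) -> isHom B A g.
Proof.
  intros [hm hj hi hl ht hb] ge eg. split; intros.
  - rewrite <- (eg a), <- (eg b), <- hm, !ge. reflexivity.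
  - rewrite <- (eg a), <- (eg b), <- hj, !ge. reflexivity.
  - rewrite <- (eg a), <- (eg b), <- hi, !ge. reflexivity.
  - rewrite <- (eg a), <- (eg b), <- hl, !ge. reflexivity.
  - rewrite <- ht, ge. reflexivity.
  - rewrite <- hb, ge. reflexivity.
Qed.

Lemma eta_hom A (hd : isDescr (frmOf A)) (HA : isHLA A) :
  isHom A (algOf (mkDF (frmOf A) hd)) (etaf A hd).
Proof.
  split; intros; apply sig_eq_of.
  - exact (L_and A HA a b).
  - exact (L_or A HA a b).
  - exact (eq_sym (L_imp A HA a b)).
  - exact (eq_sym (L_lew A HA a b)).
  - exact (L_top A HA).
  - exact (L_bot A HA).
Qed.

Definition etag (A : HLAraw) (hd : isDescr (frmOf A))
  (b : hcar (algOf (mkDF (frmOf A) hd))) : hcar A :=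
  proj1_sig (constructive_indefinite_description _ (proj2_sig b)).

Lemma etag_spec A hd b : proj1_sig b = tl A (etag A hd b).
Proof. unfold etag. destruct (constructive_indefinite_description _ _) as [a E]. exact E. Qed.

Lemma eta_iso A (hd : isDescr (frmOf A)) (HA : isHLA A) :
  (forall a, etag A hd (etaf A hd a) = a) /\ (forall b, etaf A hd (etag A hd b) = b).
Proof.
  split.
  - intro a. apply (L_inj A HA). rewrite <- etag_spec. reflexivity.
  - intro b. apply sig_eq_of. simpl. rewrite <- etag_spec. reflexivity.
Qed.

Lemma eps_pf (X : DFrame) (x : fcar X) : primef (algOf X) (fun a => proj1_sig a x).
Proof.
  split.
  - intros a b H Ha. rewrite hle_alg in H. auto.
  - intros a b Ha Hb; simpl; unfold sand; auto.
  - simpl; auto.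
  - simpl; auto.
  - intros a b H; simpl in H; unfold sor in H; auto.
Qed.

Definition epsf (X : DFrame) (x : fcar X) : fcar (frmOf (algOf X)) :=
  exist _ (fun a => proj1_sig a x) (eps_pf X x).

Lemma eps_le (X : DFrame) x y : fle X x y <-> fle (frmOf (algOf X)) (epsf X x) (epsf X y).
Proof.
  simpl. split.
  - intros L a Ha. apply (d_upset _ (dax X) _ (proj2_sig a) x y); auto.
  - intros H. apply NNPP; intro N. destruct (d_le_ref _ (dax X) x y N) as [a [Pa [Ax Ay]]].
    apply Ay. apply (H (exist _ a Pa)). exact Ax.
Qed.

Lemma eps_sq (X : DFrame) x y : fsq X x y <-> fsq (frmOf (algOf X)) (epsf X x) (epsf X y).
Proof.
  simpl. split.
  - intros S a b H Ay. unfold slew in H. eauto.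
  - intros H. apply NNPP; intro N. destruct (d_sq_ref _ (dax X) x y N) as [a [b [Pa [Pb [S [Ay By]]]]]].
    apply By. apply (H (exist _ a Pa) (exist _ b Pb)); simpl; auto.
Qed.

Lemma eps_inj (X : DFrame) x y : epsf X x = epsf X y -> x = y.
Proof.
  intro E. apply (d_antisym _ (dax X)); apply eps_le; rewrite E; intros a Ha; auto.
Qed.

Lemma fip_lemma (X : DFrame) (y : fcar (frmOf (algOf X))) l :
  (forall s, In s l ->
     (exists a, proj1_sig y a /\ s = proj1_sig a) \/
     (exists a, ~ proj1_sig y a /\ s = (fun x => ~ proj1_sig a x))) ->
  exists a b, proj1_sig y a /\ ~ proj1_sig y b /\
    forall s, In s l -> forall x, proj1_sig a x -> ~ proj1_sig b x -> s x.
Proof.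
  destruct y as [y Hy]; simpl.
  induction l as [|s l IH]; intro HF.
  - exists (htop (algOf X)), (hbot (algOf X)). split; [apply (pf_top _ _ Hy)|].
    split; [apply (pf_bot _ _ Hy)|]. simpl; tauto.
  - destruct IH as [a [b [Ya [Nb Hl]]]]; [intros; apply HF; simpl; auto|].
    destruct (HF s (or_introl eq_refl)) as [[c [Yc E]]|[c [Nc E]]]; subst.
    + exists (hmeet (algOf X) a c), b. split; [apply (pf_meet _ _ Hy); auto|]. split; auto.
      intros s [E|I] x Hx Hb; simpl in Hx; unfold sand in Hx; subst; [tauto|].
      apply Hl; tauto.
    + exists a, (hjoin (algOf X) b c). split; auto.
      split; [intro P; destruct (pf_prime _ _ Hy _ _ P); auto|].
      intros s [E|I] x Hx Hb; simpl in Hb; unfold sor in Hb; subst; [tauto|].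
      apply Hl; tauto.
Qed.

Lemma eps_surj (X : DFrame) (y : fcar (frmOf (algOf X))) : exists x, epsf X x = y.
Proof.
  set (F := fun s : fcar X -> Prop =>
     (exists a, proj1_sig y a /\ s = proj1_sig a) \/
     (exists a, ~ proj1_sig y a /\ s = (fun x => ~ proj1_sig a x))).
  destruct (d_compact _ (dax X) F) as [x Hx].
  - intros s [[a [_ E]]|[a [_ E]]]; subst.
    + left. exact (proj2_sig a).
    + right. exists (proj1_sig a); split; [exact (proj2_sig a)|reflexivity].
  - intros l Hl. destruct (fip_lemma X y l Hl) as [a [b [Ya [Nb H]]]].
    apply NNPP; intro N. apply Nb. eapply (pf_up _ _ (proj2_sig y)); [|exact Ya].
    apply hle_alg. intros x Ax. apply NNPP; intro Bx. apply N. exists x.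
    intros s I. apply (H s I); auto.
  - exists x. apply sig_ext. intro a; simpl. destruct (classic (proj1_sig y a)) as [Ya|Na].
    + split; auto. intros _. apply (Hx (proj1_sig a)). left; exists a; auto.
    + split; [|tauto]. intro Ax. exfalso. apply (Hx (fun x => ~ proj1_sig a x)); auto.
      right; exists a; auto.
Qed.

Definition epsg (X : DFrame) (y : fcar (frmOf (algOf X))) : fcar X :=
  proj1_sig (constructive_indefinite_description _ (eps_surj X y)).

Lemma epsg_spec X y : epsf X (epsg X y) = y.
Proof. unfold epsg. destruct (constructive_indefinite_description _ _) as [x E]. exact E. Qed.

Lemma epsg_inv X x : epsg X (epsf X x) = x.
Proof. apply eps_inj. apply epsg_spec. Qed.

Lemma eps_mor (X : DFrame) : isDMor X (frmOf (algOf X)) (epsf X).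
Proof.
  split.
  - intros x y; apply eps_le.
  - intros x z' L. exists (epsg X z'). rewrite epsg_spec. split; auto.
    apply eps_le. rewrite epsg_spec. exact L.
  - intros x y; apply eps_sq.
  - intros x z' L. exists (epsg X z'). rewrite epsg_spec. split; auto.
    apply eps_sq. rewrite epsg_spec. exact L.
  - intros a' [a0 E]; subst. exact (proj2_sig a0).
Qed.

Lemma epsg_mor (X : DFrame) : isDMor (frmOf (algOf X)) X (epsg X).
Proof.
  split.
  - intros y1 y2 L. apply eps_le. rewrite !epsg_spec. exact L.
  - intros y z' L. exists (epsf X z'). rewrite epsg_inv. split; auto.
    rewrite <- (epsg_spec X y). apply eps_le. exact L.
  - intros y1 y2 L. apply eps_sq. rewrite !epsg_spec. exact L.
  - intros y z' L. exists (epsf X z'). rewrite epsg_inv. split; auto.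
    rewrite <- (epsg_spec X y). apply eps_sq. exact L.
  - intros a' Pa. exists (exist _ a' Pa). apply set_ext. intro y.
    transitivity (proj1_sig (epsf X (epsg X y)) (exist _ a' Pa)); [simpl; tauto|].
    rewrite epsg_spec. tauto.
Qed.

Theorem theorem3p20 :
  (* (.)^* is a (contravariant) functor D-Frm -> HLAs *)
  (forall X : DFrame, isHLA (algOf X)) /\
  (forall (X Y : DFrame) (f : DMor X Y),
      isHom (algOf Y) (algOf X) (algMor X Y f)) /\
  (forall (X : DFrame) (i : DMor X X), (forall x, i x = x) ->
      forall a, algMor X X i a = a) /\
  (forall (X Y Z : DFrame) (f : DMor X Y) (g : DMor Y Z) (gf : DMor X Z),
      (forall x, gf x = g (f x)) ->
      forall a, algMor X Z gf a = algMor X Y f (algMor Y Z g a)) /\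
  (* (.)_* is a (contravariant) functor HLAs -> D-Frm *)
  (forall A : HLAraw, isHLA A -> isDescr (frmOf A)) /\
  (forall (A B : HLAraw) (h : Hom A B), isHLA A -> isHLA B ->
      isDMor (frmOf B) (frmOf A) (frmMor A B h)) /\
  (forall (A : HLAraw) (i : Hom A A), isHLA A -> (forall a, i a = a) ->
      forall p, frmMor A A i p = p) /\
  (forall (A B C : HLAraw) (h : Hom A B) (k : Hom B C) (kh : Hom A C),
      isHLA A -> isHLA B -> isHLA C ->
      (forall a, kh a = k (h a)) ->
      forall p, frmMor A C kh p = frmMor A B h (frmMor B C k p)) /\
  (* natural isomorphism  Id_HLAs ≅ ((.)_* )^* *)
  (exists eta : forall (A : HLAraw) (hd : isDescr (frmOf A)),
                  hcar A -> hcar (algOf (mkDF (frmOf A) hd)),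
     (forall (A : HLAraw) (hd : isDescr (frmOf A)), isHLA A ->
        isHom A (algOf (mkDF (frmOf A) hd)) (eta A hd) /\
        exists g : hcar (algOf (mkDF (frmOf A) hd)) -> hcar A,
          isHom (algOf (mkDF (frmOf A) hd)) A g /\
          (forall a, g (eta A hd a) = a) /\ (forall b, eta A hd (g b) = b)) /\
     (forall (A B : HLAraw) (hdA : isDescr (frmOf A)) (hdB : isDescr (frmOf B))
             (h : Hom A B) (m : DMor (mkDF (frmOf B) hdB) (mkDF (frmOf A) hdA)),
        isHLA A -> isHLA B ->
        (forall q, m q = frmMor A B h q) ->
        forall a, eta B hdB (h a) =
                  algMor (mkDF (frmOf B) hdB) (mkDF (frmOf A) hdA) m (eta A hdA a))) /\
  (* natural isomorphism  Id_D-Frm ≅ ((.)^* )_* *)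
  (exists eps : forall (X : DFrame) (hd : isDescr (frmOf (algOf X))),
                  fcar X -> fcar (frmOf (algOf X)),
     (forall (X : DFrame) (hd : isDescr (frmOf (algOf X))),
        isDMor X (frmOf (algOf X)) (eps X hd) /\
        exists g : fcar (frmOf (algOf X)) -> fcar X,
          isDMor (frmOf (algOf X)) X g /\
          (forall x, g (eps X hd x) = x) /\ (forall y, eps X hd (g y) = y)) /\
     (forall (X Y : DFrame) (hdX : isDescr (frmOf (algOf X)))
             (hdY : isDescr (frmOf (algOf Y)))
             (f : DMor X Y) (k : Hom (algOf Y) (algOf X)),
        (forall a, k a = algMor X Y f a) ->
        forall x, eps Y hdY (f x) = frmMor (algOf Y) (algOf X) k (eps X hdX x))).
Proof.
  split; [exact alg_HLA|].
  split; [exact alg_hom|].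
  split.
  { intros X i Hi a. apply sig_ext; intro x; simpl. rewrite Hi. tauto. }
  split.
  { intros X Y Z f g gf Hgf a. apply sig_ext; intro x; simpl. rewrite Hgf. tauto. }
  split; [exact frm_descr|].
  split; [intros; apply frm_hom; auto|].
  split.
  { intros A i HA Hi p. apply sig_ext; intro a; simpl. rewrite Hi. tauto. }
  split.
  { intros A B C h k kh HA HB HC Hkh p. apply sig_ext; intro a; simpl. rewrite Hkh. tauto. }
  split.
  - exists etaf. split.
    + intros A hd HA. split; [apply eta_hom; auto|].
      destruct (eta_iso A hd HA) as [I1 I2].
      exists (etag A hd). split; [|split; auto].
      apply (hom_inv _ _ (etaf A hd)); auto. apply eta_hom; auto.
    + intros A B hdA hdB h m HA HB Hm a. apply sig_ext; intro q; simpl.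
      rewrite Hm. simpl. tauto.
  - exists (fun X hd => epsf X). split.
    + intros X hd. split; [apply eps_mor|]. exists (epsg X). split; [apply epsg_mor|].
      split; [apply epsg_inv|apply epsg_spec].
    + intros X Y hdX hdY f k Hk x. apply sig_ext; intro a; simpl. rewrite Hk. simpl. tauto.
Qed.
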